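(* Let $b\ge 3$, let $\mathbb R_b$ be a complete system of residues mod $b$ (possibly containing negative integers), and let $D\subset\mathbb R_b$ with $2\le|D|<b$. Suppose $S\subset\mathbb R_b$ is a set of integers with $|S|>1$ and $S-S=\{s-s':s,s'\in S\}\subseteq D$. Then $\mathcal C=\mathcal C_{b,D}$ is van der Corput with power savings of order $c=\frac{\log|S|}{\log b}$, i.e. $T(\mathcal C,N)\ll N^{-c}$; in particular $I(\mathcal C,N)\ll N^{-c}$, i.e. every $A\subset[N]$ with $(A-A)\cap\mathcal C=\emptyset$ satisfies $|A|\ll N^{1-c}$.
   Context: $\mathcal C_{b,D}=\{\sum_{j=0}^{k} d_j b^j : k\in\mathbb N_0,\ d_j\in D\}$. $[N]=\{1,\dots,N\}$. For $H\subset\mathbb Z$: $I(H,N)=\max\{|A|/N: A\subset[N],\ (A-A)\cap H=\emptyset\}$ (differences $a-a'$ with $a\neq a'$); $T(H,N)=\inf a_0$ over all real trigonometric polynomials $T(x)=a_0+\sum_{n<N,\,n\in H} a_n\cos(2\pi n x)$ with $T(0)=1$ and $T(x)\ge 0$ for all $x$. $H$ has power savings of order $c$ in the van der Corput property if $T(H,N)\ll N^{-c}$, and in the intersective property if $I(H,N)\ll N^{-c}$. *)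

(* Defs.v *)
From HB Require Import structures.
From mathcomp Require Import all_boot all_order all_algebra.
From mathcomp Require Import boolp classical_sets reals trigo exp.
Set Implicit Arguments. Unset Strict Implicit. Unset Printing Implicit Defensive.
Import Order.TTheory GRing.Theory Num.Theory.
Local Open Scope ring_scope.
Local Open Scope classical_set_scope.

Definition digit_set (b : nat) (D : seq int) : set int :=
  [set n | exists (k : nat) (d : 'I_k.+1 -> int),
     (forall j, d j \in D) /\ n = \sum_(j < k.+1) d j * (b%:Z) ^+ j].

Definition complete_residue_system (b : nat) (R : seq int) : Prop :=
  size R = b /\ uniq [seq (x %% b%:Z)%Z | x <- R].

Definition trig_poly (R : realType) (H : set int) (N : nat) (a : nat -> R) (x : R) : R :=
  a 0%N + \sum_(1 <= n < N | `[< H n%:Z \/ H (- n%:Z) >]) a n * cos (2 * pi * n%:R * x).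

Definition vdC_T (R : realType) (H : set int) (N : nat) : R :=
  inf [set a0 | exists a : nat -> R, a 0%N = a0 /\ trig_poly H N a 0 = 1 /\
                 (forall x, 0 <= trig_poly H N a x)].

(* A subset of [N] = {1..N}, represented by 'I_N with i standing for i+1, with
   no nonzero difference in H *)
Definition intersective_adm (H : set int) (N : nat) (A : {set 'I_N}) : Prop :=
  forall a a' : 'I_N, a \in A -> a' \in A -> a != a' -> ~ H (a%:Z - a'%:Z).

Definition intersective_I (R : realType) (H : set int) (N : nat) : R :=
  sup [set (#|A|%:R / N%:R : R) | A in intersective_adm H (N := N)].

(* Main.v *)
Require Import Defs.
From HB Require Import structures.
From mathcomp Require Import all_boot all_order all_algebra.
From mathcomp Require Import boolp classical_sets reals trigo exp.
From mathcomp Require Import lra zify.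
Import Order.TTheory GRing.Theory Num.Theory.
Local Open Scope ring_scope.
Local Open Scope classical_set_scope.


Lemma cos_abs (R : realType) (d : int) (x : R) :
  cos (2 * pi * (absz d)%:R * x) = cos (2 * pi * d%:~R * x).
Proof.
rewrite natr_absz intr_norm.
have [d0|d0] := lerP 0 (d%:~R : R).
  by rewrite ger0_norm.
by rewrite ltr0_norm // -cosN; congr cos; lra.
Qed.

Lemma Q_ge0 (R : realType) (F : finType) (v : F -> int) (x : R) :
  0 <= \sum_f \sum_g cos (2 * pi * (v f - v g)%:~R * x).
Proof.
have -> : \sum_f \sum_g cos (2 * pi * (v f - v g)%:~R * x) =
  (\sum_f cos (2 * pi * (v f)%:~R * x)) ^+ 2 + (\sum_f sin (2 * pi * (v f)%:~R * x)) ^+ 2.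
  rewrite !expr2 !mulr_suml -big_split /=; apply: eq_bigr => f _.
  rewrite !mulr_sumr -big_split /=; apply: eq_bigr => g _.
  rewrite -cosB; congr cos; rewrite rmorphB /=; lra.
by rewrite addr_ge0 // sqr_ge0.
Qed.

Lemma inner_sum (R : realType) (H : set int) (N : nat) (d : int) (x : R) :
  d != 0 -> H d -> `|d| < N%:Z ->
  \sum_(1 <= i < N | `[< H i%:Z \/ H (- i%:Z) >]) ((absz d == i)%:R * cos (2 * pi * i%:R * x))
  = cos (2 * pi * d%:~R * x).
Proof.
move=> d0 Hd dN.
have w1 : (1 <= absz d)%N by rewrite lt0n absz_eq0.
have wN : (absz d < N)%N by rewrite -ltz_nat abszE.
have Pw : `[< H (absz d)%:Z \/ H (- (absz d)%:Z) >].
  apply/asboolP; rewrite abszE.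
  have [d0'|d0'] := lerP 0 d.
    by left; rewrite ger0_norm.
  by right; rewrite ltr0_norm // opprK.
rewrite big_mkcond /= (bigD1_seq (absz d)) /=; last exact: iota_uniq.
  rewrite Pw eqxx mul1r cos_abs big1 ?addr0 // => i /negbTE ni.
  by rewrite eq_sym ni mul0r if_same.
by rewrite mem_index_iota w1.
Qed.

Lemma T_bound (R : realType) (H : set int) (N : nat) (F : finType) (v : F -> int) :
  injective v -> (forall f g, H (v f - v g)) -> (forall f g, `|v f - v g| < N%:Z) ->
  (0 < #|F|)%N -> vdC_T R H N <= (#|F|%:R)^-1.
Proof.
move=> vinj vH vN F0.
set n := #|F|.
have n0 : (n%:R : R) != 0 by rewrite pnatr_eq0 -lt0n.
pose Q (x : R) := \sum_f \sum_g cos (2 * pi * (v f - v g)%:~R * x).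
pose a (i : nat) : R := ((i == 0)%:R * n%:R +
   \sum_f \sum_(g | g != f) (absz (v f - v g) == i)%:R) / (n%:R ^+ 2).
have sum0 : \sum_f \sum_(g | g != f) ((absz (v f - v g) == 0%N)%:R : R) = 0.
  by apply: big1 => f _; apply: big1 => g gf; rewrite absz_eq0 subr_eq0 (inj_eq vinj) eq_sym (negbTE gf).
have a0 : a 0%N = n%:R^-1.
  by rewrite /a /= mul1r sum0 addr0 expr2 invfM mulrA divff // mul1r.
have trigE x : trig_poly H N a x = Q x / (n%:R ^+ 2).
  have nn : (n%:R : R)^-1 = n%:R / n%:R ^+ 2 by rewrite expr2 invfM mulrA divff // mul1r.
  rewrite /trig_poly -/(a 0%N) a0 nn /a.
  have -> : \sum_(1 <= n0 < N | `[< H n0%:Z \/ H (- n0%:Z) >])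
       (((n0 == 0)%:R * n%:R + \sum_f \sum_(g | g != f) ((absz (v f - v g) == n0)%:R : R)) / n%:R ^+ 2 *
        cos (2 * pi * n0%:R * x)) =
      (\sum_f \sum_(g | g != f) cos (2 * pi * (v f - v g)%:~R * x)) / n%:R ^+ 2.
    under eq_bigr do rewrite mulrDl mulrDl.
    rewrite big_split /= [X in X + _](_ : _ = 0) ?add0r; last first.
      rewrite big_nat_cond big1 // => i /andP[/andP[i1 _] _].
      by rewrite (_ : i == 0 = false) ?mul0r // ; case: i i1.
    under eq_bigr do rewrite mulrAC.
    rewrite -mulr_suml; congr (_ / _).
    under [LHS]eq_bigr => i _ do rewrite mulr_suml.
    under [LHS]eq_bigr => i _ do under eq_bigr => f _ do rewrite mulr_suml.
    rewrite /= exchange_big /=; apply: eq_bigr => f _.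
    rewrite exchange_big /=; apply: eq_bigr => g gf.
    rewrite -(@inner_sum R H N (v f - v g) x _ (vH f g) (vN f g)); last by rewrite subr_eq0 (inj_eq vinj) eq_sym.
    by [].
  rewrite -mulrDl; congr (_ / _).
  rewrite /Q /n -sum1_card natr_sum -big_split /=.
  apply: eq_bigr => f _; rewrite [RHS](bigD1 f) //= subrr mulr0z mulr0 mul0r cos0.
  by [].
have Ea : [set a0 | exists a : nat -> R, a 0%N = a0 /\ trig_poly H N a 0 = 1 /\
                 (forall x, 0 <= trig_poly H N a x)] (n%:R^-1).
  exists a; split => //; split => [|x]; rewrite trigE.
    rewrite /Q.
    under eq_bigr do under eq_bigr do rewrite mulr0 cos0.
    rewrite /= sumr_const sumr_const (_ : #|xpredT| = n) //.
    have -> : (n%:R : R) *+ n = n%:R ^+ 2 by rewrite expr2 mulr_natr.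
    by rewrite divff // expf_neq0.
  by rewrite divr_ge0 ?Q_ge0 // exprn_ge0.
rewrite /vdC_T; case: (pselect (has_lbound [set a0 | exists a : nat -> R, a 0%N = a0 /\ trig_poly H N a 0 = 1 /\
                 (forall x, 0 <= trig_poly H N a x)])) => hl.
  exact: ge_inf.
rewrite inf_out; first by rewrite invr_ge0.
by case.
Qed.

Lemma I_count (H : set int) (N : nat) (F : finType) (v : F -> int) (W : nat) :
  injective v -> (forall f g, H (v f - v g)) -> (forall f, `|v f| <= W%:Z) ->
  forall A : {set 'I_N}, intersective_adm H A -> (#|A| * #|F| <= N + 2 * W)%N.
Proof.
move=> vinj vH vW A adm.
pose phi (p : 'I_N * F) : nat := absz (p.1%:Z - v p.2 + W%:Z).
have phiE p : (phi p)%:Z = p.1%:Z - v p.2 + W%:Z.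
  rewrite /phi abszE ger0_norm //.
  have := vW p.2; rewrite ler_norml => /andP[_ h].
  have : 0 <= (p.1 : nat)%:Z by [].
  lia.
have := @uniq_leq_size _ [seq phi p | p <- enum (finset.setX A [set: F]%SET)] (iota 0 (N + 2 * W)).
rewrite size_map -cardE cardsX cardsT size_iota; apply.
  rewrite map_inj_in_uniq ?enum_uniq // => -[p1 p2] [q1 q2].
  rewrite !mem_enum !finset.in_setX !finset.in_setT !andbT /= => pA qA.
  move=> /(congr1 (fun z : nat => z%:Z)); rewrite !phiE /= => e.
  have [e1|ne] := eqVneq p1 q1.
    have e2 : v p2 = v q2 by move: e; rewrite e1; lia.
    by rewrite e1 (vinj _ _ e2).
  exfalso; apply: (adm _ _ pA qA ne).
  have -> : (p1 : nat)%:Z - (q1 : nat)%:Z = v p2 - v q2 by lia.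
  exact: vH.
move=> z /mapP [p _ ->]; rewrite mem_iota /= add0n -ltz_nat phiE.
have := vW p.2; rewrite ler_norml => /andP[h _].
have := ltn_ord p.1; rewrite -ltz_nat.
rewrite PoszD PoszM; move: (v p.2) h (nat_of_ord p.1) => y h x; lia.
Qed.

Lemma I_sup (R : realType) (H : set int) (N : nat) (B : R) :
  0 <= B -> (forall A : {set 'I_N}, intersective_adm H A -> #|A|%:R / N%:R <= B) ->
  intersective_I R H N <= B.
Proof.
move=> B0 hB; rewrite /intersective_I; apply: ge_sup.
  exists (#|(finset.set0 : {set 'I_N})|%:R / N%:R), finset.set0 => //.
  by move=> a a'; rewrite finset.in_set0.
by move=> _ [A hA <-]; exact: hB.
Qed.

Lemma real_bound (R : realType) (b m E N k : nat) : (1 < b)%N -> (0 < m)%N -> (0 < E)%N -> (0 < N)%N ->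
  (N < E * b ^ k.+1)%N -> forall c : R, c = ln m%:R / ln b%:R ->
  2 / (m%:R ^+ k) <= (2 * m%:R * E%:R `^ c) * N%:R `^ (- c).
Proof.
move=> b1 m0 E0 N0 NE c cE.
have lnb : 0 < ln (b%:R : R) by apply: ln_gt0; rewrite ltr1n.
have hc : 0 <= c by rewrite cE divr_ge0 ?(ltW lnb) // ln_ge0 // ler1n.
have hbc : (b%:R : R) `^ c = m%:R.
  rewrite /powR gt_eqF ?ltr0n ?(ltn_trans _ b1) //.
  rewrite cE divfK ?gt_eqF // lnK // posrE ltr0n //.
have h1 : (N%:R : R) `^ c <= E%:R `^ c * m%:R ^+ k.+1.
  apply: (@le_trans _ _ ((E * b ^ k.+1)%:R `^ c)).
    by apply: ge0_ler_powR => //; rewrite ?nnegrE ?ler0n // ler_nat ltnW.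
  rewrite natrM powRM ?ler0n // natrX -powR_mulrn ?ler0n // powRAC hbc powR_mulrn ?ler0n //.
have Nc : 0 < (N%:R : R) `^ c by rewrite powR_gt0 // ltr0n.
have Ec : 0 < (E%:R : R) `^ c by rewrite powR_gt0 // ltr0n.
have mk : 0 < (m%:R : R) ^+ k by rewrite exprn_gt0 // ltr0n.
rewrite powRN ler_pdivrMr // mulrAC ler_pdivlMr //; rewrite exprS in h1.
have : 0 < (m%:R : R) by rewrite ltr0n.
nra.
Qed.

Lemma res_inj (b : nat) (Rb : seq int) : uniq [seq (x %% b%:Z)%Z | x <- Rb] ->
  {in Rb &, forall x y, (x %% b%:Z)%Z = (y %% b%:Z)%Z -> x = y}.
Proof.
elim: Rb => //= r Rb IH /andP[nr u] x y; rewrite !inE => /predU1P[->|xR] /predU1P[->|yR] e //.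
- by move: nr; rewrite e (map_f (fun x => (x %% b%:Z)%Z) yR).
- by move: nr; rewrite -e (map_f (fun x => (x %% b%:Z)%Z) xR).
- exact: IH.
Qed.

Definition bv (b : nat) (S : seq int) k (f : 'I_k -> 'I_(size S)) : int :=
  \sum_(j < k) S`_(f j) * (b%:Z) ^+ j.
Arguments bv b {S k} f.

Lemma bv_inj (b : nat) (S : seq int) : (0 < b)%N ->
  {in S &, forall x y, (x %% b%:Z)%Z = (y %% b%:Z)%Z -> x = y} -> uniq S ->
  forall k (f g : 'I_k -> 'I_(size S)), bv b f = bv b g -> f =1 g.
Proof.
move=> b0 resS uS; elim=> [|k IH] f g; first by move=> _ [].
rewrite /bv !big_ord_recl /= !expr0 !mulr1.
under eq_bigr do rewrite exprS mulrCA.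
under [X in _ = _ + X]eq_bigr do rewrite exprS mulrCA.
rewrite -!mulr_sumr => e.
have e0 : S`_(f ord0) = S`_(g ord0).
  apply: resS; rewrite ?mem_nth //.
  by rewrite -(modzMDl (\sum_(i < k) S`_(f (lift ord0 i)) * b%:Z ^+ i)) mulrC addrC e addrC mulrC modzMDl.
have eX : bv b (fun i => f (lift ord0 i)) = bv b (fun i => g (lift ord0 i)).
  move: e; rewrite e0 => /addrI /mulfI; apply.
  by rewrite eqz_nat -lt0n.
move=> j; case: (unliftP ord0 j) => [j'|] ->.
  exact: (IH _ _ eX j').
by apply: val_inj; apply/eqP; rewrite -(nth_uniq 0 _ _ uS) ?ltn_ord // e0.
Qed.

Lemma geom_lt (b k : nat) : (1 < b)%N -> \sum_(j < k) (b%:Z)^+j < (b%:Z)^+k.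
Proof.
move=> b1; elim: k => [|k IH]; first by rewrite big_ord0 expr0.
rewrite big_ord_recr /= exprSr.
have hb : 2 <= b%:Z by rewrite lez_nat.
move: IH (exprn_ge0 k (lez_nat 0 b : 0 <= b%:Z)).
move: (\sum_(i < k) _) (b%:Z ^+ k) => s x.
nia.
Qed.

Lemma bv_bound (b : nat) (S : seq int) k (f : 'I_k -> 'I_(size S)) : (1 < b)%N ->
  `|bv b f| <= (\sum_(s <- S) absz s)%:Z * (b%:Z)^+k.
Proof.
move=> b1; rewrite /bv.
apply: (le_trans (ler_norm_sum _ _ _)).
apply: (@le_trans _ _ (\sum_(j < k) (\sum_(s <- S) absz s)%:Z * b%:Z ^+ j)).
  apply: ler_sum => j _; rewrite normrM normrX (@ger0_norm _ b%:Z) //.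
  apply: ler_wpM2r; first exact: exprn_ge0.
  have hS : S`_(f j) \in S by rewrite mem_nth.
  rewrite -abszE lez_nat (big_rem _ hS) /=; exact: leq_addr.
rewrite -mulr_sumr; apply: ler_wpM2l => //.
exact: (ltW (geom_lt b k b1)).
Qed.

Lemma bv_mem (b : nat) (D S : seq int) k (f g : 'I_k -> 'I_(size S)) :
  (0 \in D) -> (forall s s', s \in S -> s' \in S -> s - s' \in D) ->
  digit_set b D (bv b f - bv b g).
Proof.
move=> D0 SD.
pose d (j : 'I_k.+1) : int := if insub (val j) is Some j' then S`_(f j') - S`_(g j') else 0.
exists k, d; split.
  move=> j; rewrite /d; case: insubP => [j' _ _|_] //.
  by apply: SD; rewrite mem_nth.
rewrite big_ord_recr /= /d insubF ?ltnn // mul0r addr0 /bv -sumrB.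
apply: eq_bigr => j _; rewrite (insubT (fun x => x < k)%N (ltn_ord j)) /=.
rewrite mulrBl; congr (S`_(f _) * _ - S`_(g _) * _); exact: val_inj.
Qed.

Theorem mainTheorem3 (R : realType) (b : nat) (Rb D S : seq int) :
  (3 <= b)%N ->
  complete_residue_system b Rb ->
  uniq D -> {subset D <= Rb} -> (2 <= size D)%N -> (size D < b)%N ->
  uniq S -> {subset S <= Rb} -> (1 < size S)%N ->
  (forall s s', s \in S -> s' \in S -> s - s' \in D) ->
  let c : R := ln (size S)%:R / ln b%:R in
  exists K : R, 0 < K /\
    forall N : nat, (1 <= N)%N ->
      vdC_T R (digit_set b D) N <= K * (N%:R `^ (- c)) /\
      intersective_I R (digit_set b D) N <= K * (N%:R `^ (- c)).
Proof.
move=> b3 [sRb uRb] uD DR D2 Db uS SR S1 SD c.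
have b1 : (1 < b)%N by lia.
have m0 : (0 < size S)%N by lia.
have D0 : 0 \in D.
  have := SD S`_0 S`_0; rewrite subrr; apply; rewrite mem_nth //.
have resS : {in S &, forall x y, (x %% b%:Z)%Z = (y %% b%:Z)%Z -> x = y}.
  by move=> x y xS yS; apply: (res_inj _ _ uRb); apply: SR.
set M := (\sum_(s <- S) absz s)%N.
set E := (2 * M + 1)%N.
have E0 : (0 < E)%N by lia.
exists (2 * (size S)%:R * E%:R `^ c); split.
  by rewrite mulr_gt0 ?powR_gt0 ?ltr0n // mulr_gt0 // ltr0n.
move=> N N1.
have [k [hk1 hk2]] : exists k, ((k = 0)%N \/ (2 * M * b ^ k < N)%N) /\ (N < E * b ^ k.+1)%N.
  case: (ltnP N E) => NE.
    exists 0%N; split; first by left.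
    by rewrite expn1; nia.
  have q0 : (0 < N %/ E)%N by rewrite divn_gt0.
  have h1 := trunc_logP b1 q0; have h2 := trunc_log_ltn (N %/ E) b1.
  have h3 := leq_trunc_div N E; have h4 := ltn_ceil N E0.
  exists (trunc_log b (N %/ E)); split; [right|].
    move: h1 h3; rewrite expnS in h2 *; move: (b ^ trunc_log b (N %/ E))%N => x; nia.
  move: h2 h4; move: (b ^ (trunc_log b (N %/ E)).+1)%N => x; nia.
pose F := {ffun 'I_k -> 'I_(size S)}.
pose v (f : F) := bv b (fun j => f j).
have vinj : injective v.
  move=> f g /(bv_inj _ _ (ltnW b1) resS uS) h; apply/ffunP => j; exact: h.
have vH f g : digit_set b D (v f - v g) by exact: bv_mem.
have vB f : `|v f| <= (M * b ^ k)%N%:Z.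
  by rewrite PoszM -[Posz (b ^ k)]natz natrX natz; exact: bv_bound.
have cardF : #|F| = (size S ^ k)%N by rewrite card_ffun !card_ord.
have key := @real_bound R b (size S) E N k b1 m0 E0 N1 hk2 c erefl.
have mk : 0 < ((size S)%:R : R) ^+ k by rewrite exprn_gt0 // ltr0n.
split.
  apply: le_trans (@T_bound R _ N F v vinj vH _ _) _.
  - move=> f g; case: hk1 => [k0|hk].
      rewrite /v /bv; move: (f) (g); rewrite k0 => f' g'.
      by rewrite !big_ord0 subrr normr0 ltz_nat.
    apply: (le_lt_trans (ler_normB _ _)).
    have := vB f; have := vB g; rewrite -ltz_nat in hk.
    rewrite PoszM in hk *; lia.
  - by rewrite cardF expn_gt0 m0.
  apply: (le_trans _ key); rewrite cardF natrX.
  have : 0 <= ((size S)%:R ^+ k : R)^-1 by rewrite invr_ge0 ltW.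
  move: (((size S)%:R ^+ k : R)^-1) => t; lra.
apply: I_sup; first by rewrite !mulr_ge0 ?powR_ge0 ?ler0n.
move=> A adm; apply: (le_trans _ key).
have hA : (#|A| * size S ^ k <= 2 * N)%N.
  case: hk1 => [k0|hk].
    rewrite k0 expn0 muln1.
    by have := max_card A; rewrite card_ord; lia.
  have := I_count _ _ _ _ _ vinj vH vB _ adm; rewrite cardF; lia.
have N0 : (0 : R) < N%:R by rewrite ltr0n.
rewrite ler_pdivrMr // mulrAC ler_pdivlMr //.
by rewrite -natrX -natrM -[2 * N%:R]natrM ler_nat.
Qed.
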